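(* Let $a$ be a positive integer and $N>0$. Then \[ \mathcal{E}_a(N)=\bigcup_{d\mid a}\{\,d\,n':\ n'\in\mathcal{E}^*_{a/d}(N/d)\,\} \] (the union over positive divisors $d$ of $a$), and consequently \[ E_a(N)=\sum_{d\mid a}E^*_{a/d}(N/d). \]
   Context: For a positive integer $b$ and a positive integer $n$, let $R(n;b)$ denote the number of pairs $(x,y)$ of positive integers with $\frac{b}{n}=\frac1x+\frac1y$. Let $\mathcal{E}_b=\{n\in\mathbb{N}: R(n;b)=0\}$ and $\mathcal{E}^*_b=\{n\in\mathcal{E}_b:\gcd(n,b)=1\}$. For real $x>0$ let $\mathcal{E}_b(x)=\{n\in\mathcal{E}_b:n\le x\}$, $\mathcal{E}^*_b(x)=\{n\in\mathcal{E}^*_b:n\le x\}$, $E_b(x)=\#\mathcal{E}_b(x)$ and $E^*_b(x)=\#\mathcal{E}^*_b(x)$. *)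

(* Defs.v *)
From mathcomp Require Import all_boot all_order all_algebra.
From mathcomp Require Import boolp reals.
Set Implicit Arguments. Unset Strict Implicit. Unset Printing Implicit Defensive.
Import Order.TTheory GRing.Theory Num.Theory.

(* (x,y) positive integers with b/n = 1/x + 1/y, cleared of denominators
   (n, x, y > 0):  b*x*y = n*(x+y). *)
Definition is_rep (b n x y : nat) : Prop :=
  (0 < x)%N /\ (0 < y)%N /\ (b * x * y = n * (x + y))%N.

Definition R_zero (b n : nat) : Prop := ~ exists x y, is_rep b n x y.

Definition inE (b n : nat) : Prop := (0 < n)%N /\ R_zero b n.

Definition inEstar (b n : nat) : Prop := inE b n /\ coprime n b.

Definition inE_le {R : realType} (b : nat) (x : R) (n : nat) : Prop :=
  inE b n /\ (n%:R <= x)%R.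
Definition inEstar_le {R : realType} (b : nat) (x : R) (n : nat) : Prop :=
  inEstar b n /\ (n%:R <= x)%R.

(* E_b(x) = #\mathcal{E}_b(x): the positive integers n <= x are exactly
   1, ..., truncn x (for x >= 0), so we count those lying in \mathcal{E}_b. *)
Definition Ecount {R : realType} (b : nat) (x : R) : nat :=
  size [seq n <- iota 1 (Num.truncn x) | `[< inE b n >] ].
Definition Estarcount {R : realType} (b : nat) (x : R) : nat :=
  size [seq n <- iota 1 (Num.truncn x) | `[< inEstar b n >] ].

(* Main.v *)
Require Import Defs.
From mathcomp Require Import all_boot all_order all_algebra.
From mathcomp Require Import boolp reals.
From mathcomp Require Import zify.
Import Order.TTheory GRing.Theory Num.Theory.

Lemma Rzero_mul (d b n : nat) : (0 < d)%N -> (R_zero (d * b) (d * n) <-> R_zero b n).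
Proof.
move=> d0; rewrite /R_zero /is_rep; split=> H [x [y [x0 [y0 e]]]]; apply: H;
  exists x, y; do 2 split => //.
- by rewrite -!mulnA; congr (d * _); rewrite mulnA e.
- by apply/eqP; rewrite -(eqn_pmul2l d0) !mulnA e.
Qed.

Lemma mem_iotaR (R : realType) (N : R) (n : nat) : (0 <= N)%R ->
  (n \in iota 1 (Num.truncn N)) = (0 < n)%N && (n%:R <= N)%R.
Proof.
move=> N0; rewrite mem_iota add1n ltnS; congr (_ && _).
by rewrite leqNgt truncn_lt_nat // -real_leNgt ?num_real // ger0_real.
Qed.

Lemma decomp (a n : nat) : (0 < a)%N -> (0 < n)%N ->
  let g := gcdn n a in
  [/\ g \in divisors a, (0 < g)%N, n = g * (n %/ g), a = g * (a %/ g)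
    & coprime (n %/ g) (a %/ g)].
Proof.
move=> a0 n0 g.
have g0 : (0 < g)%N by rewrite gcdn_gt0 n0.
have en : n = g * (n %/ g) by rewrite mulnC divnK // dvdn_gcdl.
have ea : a = g * (a %/ g) by rewrite mulnC divnK // dvdn_gcdr.
split => //; first by rewrite -dvdn_divisors // dvdn_gcdr.
apply/eqP; apply/eqP; rewrite -(eqn_pmul2l g0) muln_gcdr -en -ea muln1 //.
Qed.

Lemma gcd_unique (d n a : nat) : (0 < a)%N -> d \in divisors a ->
  coprime n (a %/ d) -> gcdn (d * n) a = d.
Proof.
move=> a0; rewrite -dvdn_divisors // => /dvdnP [k ek] cop.
rewrite ek in a0 cop *.
have d0 : (0 < d)%N by move: a0; rewrite muln_gt0 => /andP[].
rewrite mulnK // in cop.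
by rewrite [k * d]mulnC -muln_gcdr (eqP cop) muln1.
Qed.

Theorem lemma2p1 (R : realType) (a : nat) (N : R) (ha : (0 < a)%N) (hN : (0 < N)%R) :
  (forall n : nat,
     inE_le a N n <->
     exists2 d : nat, d \in divisors a &
       exists2 n' : nat, inEstar_le (a %/ d) (N / d%:R)%R n' & n = (d * n')%N)
  /\ Ecount a N = (\sum_(d <- divisors a) Estarcount (a %/ d) (N / d%:R)%R)%N.
Proof.
have hN0 : (0 <= N)%R by apply: ltW.
have dpos d : d \in divisors a -> (0 < d)%N.
  by rewrite -dvdn_divisors // => /dvdnP [k ek]; move: ha; rewrite ek muln_gt0 => /andP[].
have leR d n' : (0 < d)%N -> ((d * n')%:R <= N)%R = (n'%:R <= N / d%:R)%R.
  by move=> d0; rewrite ler_pdivlMr ?ltr0n // natrM mulrC.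
have part1 : forall n : nat,
     inE_le a N n <->
     exists2 d : nat, d \in divisors a &
       exists2 n' : nat, inEstar_le (a %/ d) (N / d%:R)%R n' & n = (d * n')%N.
  move=> n; split.
  - case=> [[n0 Rz] nle].
    have [gd g0 en ea cop] := decomp a n ha n0.
    exists (gcdn n a) => //; exists (n %/ gcdn n a) => //.
    split; last by rewrite -leR // -en.
    split=> //; split; first by rewrite en muln_gt0 g0 in n0.
    by rewrite -(Rzero_mul _ _ _ g0) -en -ea.
  - case=> d dd [n' [[[n'0 Rz] cop] le] ->].
    have d0 := dpos d dd.
    split; last by rewrite leR.
    split; first by rewrite muln_gt0 d0.
    have ea : a = d * (a %/ d) by rewrite mulnC divnK // dvdn_divisors.
    by rewrite {1}ea Rzero_mul.
split => //.
rewrite /Ecount /Estarcount.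
set t := fun d => [seq n <- iota 1 (Num.truncn (N / d%:R)) | `[< inEstar (a %/ d) n >]].
rewrite (_ : \sum_(d <- divisors a) _ = sumn [seq size (t d) | d <- divisors a]); last first.
  by rewrite sumnE big_map.
rewrite -(size_allpairs_dep (fun d n' => d * n')%N).
apply: perm_size; apply: uniq_perm.
- by apply: filter_uniq; apply: iota_uniq.
- apply: allpairs_uniq_dep; first exact: divisors_uniq.
    by move=> d _; apply: filter_uniq; apply: iota_uniq.
  move=> [d1 n1] [d2 n2] /allpairsPdep [x1 [y1 [h1 h1' e1]]] /allpairsPdep [x2 [y2 [h2 h2' e2]]] /=.
  case: e1 => e1 e1'. case: e2 => e2 e2'. subst.
  move: h1' h2'; rewrite /t !mem_filter => /andP [/asboolP [_ c1] _] /andP [/asboolP [_ c2] _] e.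
  have ex : x1 = x2 by rewrite -(gcd_unique _ _ _ ha h1 c1) -(gcd_unique _ _ _ ha h2 c2) e.
  subst x2; move/eqP: e; rewrite eqn_pmul2l ?dpos // => /eqP -> //.
have Nd0 d : d \in divisors a -> (0 <= N / d%:R)%R.
  by move=> hd; rewrite divr_ge0 // ler0n.
move=> n; rewrite mem_filter; apply/andP/allpairsPdep.
- case=> /asboolP hE; rewrite mem_iotaR // => /andP [_ le].
  have [d hd [n' hn' ->]] := (part1 n).1 (conj hE le).
  exists d, n'; split => //.
  case: hn' => hs le'.
  rewrite /t mem_filter mem_iotaR ?Nd0 //; apply/andP; split; first by apply/asboolP.
  by rewrite le' andbT; case: hs => [[]].
- case=> d [n' [hd hn' ->]].
  move: hn'; rewrite /t mem_filter => /andP [/asboolP hs]; rewrite mem_iotaR ?Nd0 // => /andP [_ le'].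
  have [[h0 hz] le2] := (part1 (d * n')%N).2 (ex_intro2 _ _ d hd (ex_intro2 _ _ n' (conj hs le') erefl)).
  split; first by apply/asboolP.
  by rewrite mem_iotaR // h0 le2.
Qed.
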